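(* Let $n \geq 3$ and let $S$ be a $4$-cap free, $n$-cup free configuration. If $S$ contains a pair of interweaved laced $(n-1)$-cups, then $S$ contains a $(3, n-1)$-gon.
   Context: A configuration is a finite set $S$ of points with a linear order $<$ and, for every $3$-element subset, an arbitrary assignment declaring it either a cap or a cup. Points $x_1<\cdots<x_a$ form an $a$-cup (resp. $a$-cap) if every consecutive triple $\{x_{i-1},x_i,x_{i+1}\}$, $1<i<a$, is assigned cup (resp. cap); $1$- and $2$-element sets are both caps and cups. The size of a cup is its number of points; a cup $x_1\cdots x_a$ runs from (starts with) $x_1$ to (ends with) $x_a$. Two cups $C_1$, $C_2$ running from $p$ to $r$ and from $q$ to $s$ respectively are interweaved if $p<q\le r<s$. An $(n-1)$-cup $C$ from $p$ to $q$ is laced if there exist a cup $C_p$ ending with $p$ and a cup $C_q$ starting with $q$ such that $|C_p|+|C_q|=n-1$. A (weak) $(a,b)$-gon is a pair consisting of an $a$-cap and a $b$-cup with the same two endpoints (they may share other vertices). *)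

(* Defs.v *)
From mathcomp Require Import all_boot.
Set Implicit Arguments. Unset Strict Implicit. Unset Printing Implicit Defensive.

(* A configuration on N points: the points are 'I_N with the natural linear
   order; [c x y z] (meaningful for x < y < z) is true iff the triple
   {x,y,z} is declared a cup, false iff it is declared a cap. *)
Definition config (N : nat) := 'I_N -> 'I_N -> 'I_N -> bool.

Fixpoint consec3 (T : Type) (P : T -> T -> T -> bool) (s : seq T) : bool :=
  match s with
  | x :: ((y :: z :: _) as t) => P x y z && consec3 P t
  | _ => true
  end.

Definition increasing N (s : seq 'I_N) : bool :=
  sorted (fun x y : 'I_N => (x < y)%N) s.

Definition is_cup N (c : config N) (s : seq 'I_N) : bool :=
  increasing s && consec3 c s.
Definition is_cap N (c : config N) (s : seq 'I_N) : bool :=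
  increasing s && consec3 (fun x y z => ~~ c x y z) s.

Definition starts_with N (s : seq 'I_N) (p : 'I_N) : bool := ohead s == Some p.
Definition ends_with N (s : seq 'I_N) (q : 'I_N) : bool := ohead (rev s) == Some q.

Definition runs N (s : seq 'I_N) (p q : 'I_N) : bool :=
  starts_with s p && ends_with s q.

Definition laced N (c : config N) (n : nat) (C : seq 'I_N) : Prop :=
  exists p q : 'I_N,
    [/\ is_cup c C, size C = n.-1, runs C p q &
     exists Cp Cq : seq 'I_N,
       [/\ is_cup c Cp, ends_with Cp p, is_cup c Cq, starts_with Cq q &
           size Cp + size Cq = n.-1]].

Definition cap_free N (c : config N) (a : nat) : Prop :=
  forall s, is_cap c s -> size s <> a.
Definition cup_free N (c : config N) (a : nat) : Prop :=
  forall s, is_cup c s -> size s <> a.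

Definition has_gon N (c : config N) (a b : nat) : Prop :=
  exists (A B : seq 'I_N) (x z : 'I_N),
    [/\ is_cap c A /\ size A = a, is_cup c B /\ size B = b, runs A x z & runs B x z].

(* Main.v *)
Require Import Defs.
From mathcomp Require Import all_boot.
From mathcomp Require Import zify.
Set Implicit Arguments. Unset Strict Implicit.

Section L.
Variables (N : nat) (c : config N).

Definition junc (s1 : seq 'I_N) (x : 'I_N) (s2 : seq 'I_N) : bool :=
  match s1, s2 with _ :: _, y :: _ => c (last x s1) x y | _, _ => true end.

Lemma cupC (x y : 'I_N) s : is_cup c (x :: y :: s) =
  [&& x < y, (if s is z :: _ then c x y z else true) & is_cup c (y :: s)].
Proof.
rewrite /is_cup /increasing /=.
case: s => [|z s] /=; first by rewrite !andbT.
by case: (x < y) => //=; case: (c x y z) => //=; rewrite andbF.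
Qed.

Lemma cup1 x : is_cup c [:: x].
Proof. by []. Qed.

Lemma cup2 x y : is_cup c [:: x; y] = (x < y).
Proof. by rewrite cupC /= andbT. Qed.

Lemma cup_cons_inv x s : is_cup c (x :: s) -> is_cup c s.
Proof. case: s => [|y s] //; by rewrite cupC => /and3P []. Qed.

Lemma cup_rcons_inv s x : is_cup c (rcons s x) -> is_cup c s.
Proof.
elim: s => [|a t IH] //=.
case: t IH => [|b t] IH //=.
rewrite !cupC => /and3P [ab H1 H2].
rewrite ab (IH H2) andbT.
by case: t H1 {IH H2}.
Qed.

Lemma glue s1 x s2 : is_cup c (rcons s1 x) -> is_cup c (x :: s2) ->
  junc s1 x s2 -> is_cup c (s1 ++ x :: s2).
Proof.
elim: s1 => [|a t IH] //=.
case: t IH => [|b t] IH /=.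
  clear IH; rewrite cup2 => ax H2 J.
  rewrite cupC ax H2 andbT.
  by case: s2 H2 J.
rewrite cupC => /and3P [ab H1 H2] H3 J.
have IH' := IH H2 H3.
rewrite cupC ab (IH' J) andbT.
by case: t H1 {IH IH' H2 J} => [|t0 t].
Qed.

Lemma glue' s1 x s2 : is_cup c (rcons s1 x) -> is_cup c (x :: s2) ->
  junc s1 x s2 -> True.
Proof. by []. Qed.

Lemma cup_cons_lt x y s : is_cup c (x :: y :: s) -> x < y.
Proof. by rewrite cupC => /and3P []. Qed.

Lemma cup_rcons_lt s x : is_cup c (rcons s x) -> s != [::] -> last x s < x.
Proof.
elim: s => [|a t IH] //= H _.
case: t IH H => [|b t] IH H /=.
  by move: H; rewrite cup2.
by apply: IH => //; apply: cup_cons_inv H.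
Qed.

Lemma cap3 (x y z : 'I_N) : x < y -> y < z -> ~~ c x y z -> is_cap c [:: x; y; z].
Proof. by rewrite /is_cap /increasing /= => -> -> ->. Qed.

Lemma cap4 (w x y z : 'I_N) : w < x -> x < y -> y < z -> ~~ c w x y -> ~~ c x y z ->
  is_cap c [:: w; x; y; z].
Proof. by rewrite /is_cap /increasing /= => -> -> -> -> ->. Qed.

Lemma ends_rcons (i : seq 'I_N) x q : ends_with (rcons i x) q = (x == q).
Proof. by rewrite /ends_with rev_rcons /=. Qed.

Lemma starts_cons (x : 'I_N) t p : starts_with (x :: t) p = (x == p).
Proof. by []. Qed.

Lemma ends_decomp (s : seq 'I_N) q : ends_with s q -> exists i, s = rcons i q.
Proof.
case/lastP: s => [|i x]; first by rewrite /ends_with.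
by rewrite ends_rcons => /eqP ->; exists i.
Qed.

Lemma starts_decomp (s : seq 'I_N) p : starts_with s p -> s = p :: behead s.
Proof. by case: s => //= a t /eqP [->]. Qed.

Lemma starts_uniq (s : seq 'I_N) a b : starts_with s a -> starts_with s b -> a = b.
Proof. by rewrite /starts_with => /eqP -> /eqP []. Qed.

Lemma ends_uniq (s : seq 'I_N) a b : ends_with s a -> ends_with s b -> a = b.
Proof. by rewrite /ends_with => /eqP -> /eqP []. Qed.

Lemma starts_rcons (i : seq 'I_N) x y p : starts_with (rcons i x) p -> i != [::] ->
  starts_with (rcons i y) p.
Proof. by case: i. Qed.

Lemma ends_cons (x y : 'I_N) t q : ends_with (x :: t) q -> t != [::] -> ends_with (y :: t) q.
Proof.
case/lastP: t => [|t z] // ; by rewrite -!rcons_cons !ends_rcons.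
Qed.

End L.

Lemma junc_cons N (c : config N) (s1 : seq 'I_N) x y t : s1 != [::] ->
  junc c s1 x (y :: t) = c (last x s1) x y.
Proof. by case: s1. Qed.

Lemma rcons_nonnil (T : eqType) (s : seq T) x : rcons s x != [::].
Proof. by case: s. Qed.

Lemma cupFG N (c : config N) F' (p q r : 'I_N) G' :
  is_cup c (rcons F' p) -> is_cup c (r :: G') -> p < q -> q < r ->
  junc c F' p [:: q] -> c p q r -> junc c [:: q] r G' ->
  is_cup c (rcons F' p ++ q :: r :: G').
Proof.
move=> cF cG pq qr J1 J2 J3.
apply: glue.
- rewrite -cats1 cat_rcons; apply: glue => //; by rewrite cup2.
- have := glue (s1 := [:: q]) (x := r) (s2 := G'); apply => //; by rewrite cup2.
- by rewrite junc_cons ?rcons_nonnil // last_rcons.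
Qed.

Lemma ar1 n : 2 < n -> (n - 3).+2 = n.-1.
Proof. rewrite -subn1; lia. Qed.
Lemma ar2 a b n : 2 < n -> a + b.+1 = n.-1 -> a + b.+2 = n.
Proof. rewrite -subn1; lia. Qed.


Theorem lemma5p2 (N n : nat) (c : config N) :
  3 <= n -> cap_free c 4 -> cup_free c n ->
  (exists (C1 C2 : seq 'I_N) (p q r s : 'I_N),
      [/\ [/\ is_cup c C1, size C1 = n.-1, runs C1 p r & laced c n C1],
          [/\ is_cup c C2, size C2 = n.-1, runs C2 q s & laced c n C2] &
          [&& p < q, q <= r & r < s]]) ->
  has_gon c 3 n.-1.
Proof.
move=> n3 cf uf [C1 [C2 [p [q [r [s [[cC1 sz1 run1 lac1] [cC2 sz2 run2 lac2] /and3P [pq qr rs]]]]]]]].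
have nm : n.-1 = n - 1 by rewrite subn1.
move: (run1) => /andP [st1 en1]; move: (run2) => /andP [st2 en2].
have [C1i eC1] := ends_decomp en1.
case/lastP eCi: C1i => [|C1ii u].
  by move: sz1; rewrite eC1 eCi /=; lia.
rewrite {}eCi in eC1.
have szi : size C1ii = n - 3 by move: sz1; rewrite eC1 !size_rcons; lia.
have ur : u < r.
  have cC1' := cC1; rewrite eC1 in cC1'.
  by have := cup_rcons_lt cC1' (rcons_nonnil _ _); rewrite last_rcons.
have eC2 := starts_decomp st2.
case eT: (behead C2) eC2 => [|v C2tt] eC2.
  by move: sz2; rewrite eC2 /=; lia.
have szt : size C2tt = n - 3 by move: sz2; rewrite eC2 /=; lia.
have qv : q < v by apply: (cup_cons_lt (c := c) (s := C2tt)); rewrite -eC2.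
have qs : q < s by lia.
have nA : ~~ c p q v.
  apply/negP => A; apply: (uf ([:: p] ++ q :: v :: C2tt)); last by rewrite /= szt; lia.
  apply: glue => //; [by rewrite cup2 | by rewrite -eC2].
have nB : ~~ c u r s.
  apply/negP => B; apply: (uf (rcons C1ii u ++ r :: [:: s])); last by rewrite size_cat size_rcons /= szi; lia.
  apply: glue => //; [by rewrite -eC1 | by rewrite cup2 | by rewrite junc_cons ?rcons_nonnil // last_rcons].
have cC1i : is_cup c (rcons C1ii u) by apply: (cup_rcons_inv (x := r)); rewrite -eC1.
have cC2t : is_cup c (v :: C2tt) by apply: (cup_cons_inv (x := q)); rewrite -eC2.
have run3 : forall x y z : 'I_N, runs [:: x; y; z] x z.
  by move=> x y z; rewrite /runs /starts_with /ends_with /rev /= !eqxx.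
case: (ltngtP q r) => [qlr | qgr | qer].
2: by lia.
2:{
have e : q = r by apply: val_inj.
subst r.
case T2: (junc c C1ii u [:: v]).
  exists [:: p; q; v], (rcons (rcons C1ii u) v), p, v; split.
  - by split; [apply: cap3 | ].
  - split; last by rewrite !size_rcons szi; exact: ar1.
    rewrite -cats1 cat_rcons; apply: glue; [exact: cC1i | rewrite cup2; exact: ltn_trans ur qv | exact: T2].
  - exact: run3.
  - apply/andP; split; last by rewrite ends_rcons.
    by apply: (starts_rcons (x := q)) (rcons_nonnil _ _); rewrite -eC1.
have ni : C1ii != [::] by case: (C1ii) T2.
rewrite junc_cons // in T2.
have wu : last u C1ii < u by apply: cup_rcons_lt cC1i ni.
case T4: (junc c [:: u] v C2tt).
  exists [:: u; q; s], (u :: v :: C2tt), u, s; split.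
  - by split; [apply: cap3 | ].
  - split; last by rewrite /= szt; exact: ar1.
    apply: (glue (s1 := [:: u])) => //; rewrite cup2; exact: ltn_trans ur qv.
  - exact: run3.
  - apply/andP; split; first by rewrite starts_cons.
    by apply: (ends_cons (x := q)) => //; rewrite -eC2.
case: C2tt T4 cC2t {eT eC2 szt} => [|z C2t3] // T4 cC2t.
have vz : v < z by apply: cup_cons_lt cC2t.
exfalso; apply: (cf [:: last u C1ii; u; v; z]) => //.
apply: cap4 => //; [exact: ltn_trans ur qv | by rewrite T2 | by rewrite /= in T4; rewrite T4].
}
case: lac1 => p' [r' [_ _ /andP [st1' en1'] [F [G [cF eF cG sG szFG]]]]].
have ep : p' = p := starts_uniq st1' st1.
have er : r' = r := ends_uniq en1' en1.
subst p' r'.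
have [F' eF'] := ends_decomp eF; subst F.
have eG := starts_decomp sG; move: (behead G) eG => G' eG; subst G.
case: lac2 => q' [s' [_ _ /andP [st2' en2'] [D [E [cD eD cE sE szDE]]]]].
have eq' : q' = q := starts_uniq st2' st2.
have es : s' = s := ends_uniq en2' en2.
subst q' s'.
have [D' eD'] := ends_decomp eD; subst D.
have eE := starts_decomp sE; move: (behead E) eE => E' eE; subst E.
case J1: (junc c F' p [:: q]); last first.
  have ni : F' != [::] by case: (F') J1.
  rewrite junc_cons // in J1.
  have fp : last p F' < p by apply: cup_rcons_lt cF ni.
  exfalso; apply: (cf [:: last p F'; p; q; v]) => //.
  by apply: cap4 => //; rewrite J1.
case J2: (c p q r); last first.
  exists [:: p; q; r], C1, p, r; split => //.
  by split; [apply: cap3 => //; rewrite J2 | ].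
case J3: (junc c [:: q] r G').
  exfalso; apply: (uf (rcons F' p ++ q :: r :: G')); first by apply: cupFG.
  by rewrite size_cat /=; apply: ar2 n3 _; move: szFG.
case: G' J3 cG {szFG sG} => [|g G''] // J3 cG.
have rg : r < g by apply: cup_cons_lt cG.
case K1: (junc c D' q [:: r]); last first.
  have ni : D' != [::] by case: (D') K1.
  rewrite junc_cons // in K1.
  have dq : last q D' < q by apply: cup_rcons_lt cD ni.
  exfalso; apply: (cf [:: last q D'; q; r; g]) => //.
  by apply: cap4 => //; [rewrite K1 | rewrite /= in J3; rewrite J3].
case K2: (c q r s); last first.
  exists [:: q; r; s], C2, q, s; split => //.
  by split; [apply: cap3 => //; rewrite K2 | ].
case K3: (junc c [:: r] s E').
  exfalso; apply: (uf (rcons D' q ++ r :: s :: E')); first by apply: cupFG.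
  by rewrite size_cat /=; apply: ar2 n3 _; move: szDE.
case: E' K3 cE {szDE sE} => [|e E''] // K3 cE.
have se : s < e by apply: cup_cons_lt cE.
exfalso; apply: (cf [:: u; r; s; e]) => //.
by apply: cap4 => //; rewrite /= in K3; rewrite K3.
Qed.
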